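(* Assume successive states are independent and identically distributed according to $m$. For every $\delta\in(0,1)$, the set $NE^b_\delta$ of Nash equilibrium payoffs of the $\delta$-discounted blind game is a subset of the set $NE_\delta$ of Nash equilibrium payoffs of the $\delta$-discounted (non-blind) game.
   Context: The (non-blind) game: finite sets $S$ (states), $A=S$ (messages), $B$ (receiver actions); payoff $u=(u^1,u^2):S\times B\to\mathbb{R}^2$ (player 1 = sender, player 2 = receiver); states $s_1,s_2,\dots$ in $S$. At each stage $n$ the sender observes $s_n$ and announces $a_n\in A$; the receiver observes $a_n$ and chooses $b_n\in B$; $b_n$ is publicly disclosed; payoffs are not observed. Sender strategies are maps $\sigma:\bigcup_{n\ge0}(S\times A\times B)^n\times S\to\Delta(A)$, receiver strategies maps $\tau:\bigcup_{n\ge0}(A\times B)^n\to\Delta(B)$, and payoffs are $\mathbf{E}_{\sigma,\tau}[\sum_{n\ge1}(1-\delta)\delta^{n-1}u(s_n,b_n)]$. The blind game is identical except that the sender does not observe the receiver's actions: sender strategies are maps $\sigma:\bigcup_{n\ge0}(S\times A)^n\times S\to\Delta(A)$. *)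

(* Defs.v *)
From mathcomp Require Import all_boot all_order all_algebra.
From mathcomp Require Import all_classical all_reals all_analysis.
Set Implicit Arguments. Unset Strict Implicit. Unset Printing Implicit Defensive.
Import Order.TTheory GRing.Theory Num.Theory.
Local Open Scope ring_scope.

Section Game.
Variables (R : realType) (S B : finType).
(* Messages: A = S.  One stage record = (state s_k, message a_k, action b_k). *)
Definition stage_rec := (S * S * B)%type.

Definition is_dist (T : finType) (p : T -> R) :=
  (forall t, 0 <= p t) /\ \sum_(t : T) p t = 1.

(* Non-blind sender strategy: past (s,a,b) history, current state |-> Delta(A) *)
Definition sender_strat := seq stage_rec -> S -> S -> R.
(* Blind sender strategy: past (s,a) history, current state |-> Delta(A) *)
Definition blind_strat := seq (S * S) -> S -> S -> R.
(* Receiver strategy: past public (a,b) history, current message |-> Delta(B);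
   (the pair "past history, current message" is an element of (A x B)^n x A) *)
Definition receiver_strat := seq (S * B) -> S -> B -> R.

Definition valid_sender (sg : sender_strat) := forall h s, is_dist (sg h s).
Definition valid_blind (sg : blind_strat) := forall h s, is_dist (sg h s).
Definition valid_receiver (tau : receiver_strat) := forall h a, is_dist (tau h a).

Definition pub (e : stage_rec) : S * B := (e.1.2, e.2).
Definition priv_blind (e : stage_rec) : S * S := e.1.

Definition blind_as_sender (sg : blind_strat) : sender_strat :=
  fun h s => sg (map priv_blind h) s.

Variable m : S -> R. (* i.i.d. law of the states *)

Fixpoint play_prob (sg : sender_strat) (tau : receiver_strat)
    (past : seq stage_rec) (rest : seq stage_rec) : R :=
  match rest with
  | [::] => 1
  | e :: r => m e.1.1 * sg past e.1.1 e.1.2 * tau (map pub past) e.1.2 e.2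
              * play_prob sg tau (rcons past e) r
  end.

Definition stage_payoff (u : S -> B -> R) (sg : sender_strat)
    (tau : receiver_strat) (n : nat) : R :=
  \sum_(h : n.-tuple stage_rec) \sum_(e : stage_rec)
     play_prob sg tau [::] (rcons h e) * u e.1.1 e.2.

(* delta-discounted payoff  E[ sum_{n>=1} (1-delta) delta^(n-1) u(s_n,b_n) ] *)
Definition disc_payoff (delta : R) (u : S -> B -> R) (sg : sender_strat)
    (tau : receiver_strat) : R :=
  limn (fun N => \sum_(0 <= n < N) (1 - delta) * delta ^+ n * stage_payoff u sg tau n).

Variables (u1 u2 : S -> B -> R).

Definition payoff_vec (delta : R) sg tau : R * R :=
  (disc_payoff delta u1 sg tau, disc_payoff delta u2 sg tau).

Definition is_NE (delta : R) (sg : sender_strat) (tau : receiver_strat) :=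
  [/\ valid_sender sg, valid_receiver tau,
      (forall sg', valid_sender sg' ->
         disc_payoff delta u1 sg' tau <= disc_payoff delta u1 sg tau)
    & (forall tau', valid_receiver tau' ->
         disc_payoff delta u2 sg tau' <= disc_payoff delta u2 sg tau)].

Definition is_NE_blind (delta : R) (sg : blind_strat) (tau : receiver_strat) :=
  [/\ valid_blind sg, valid_receiver tau,
      (forall sg', valid_blind sg' ->
         disc_payoff delta u1 (blind_as_sender sg') tau
         <= disc_payoff delta u1 (blind_as_sender sg) tau)
    & (forall tau', valid_receiver tau' ->
         disc_payoff delta u2 (blind_as_sender sg) tau'
         <= disc_payoff delta u2 (blind_as_sender sg) tau)].

Definition NE_payoffs (delta : R) : set (R * R) :=
  [set x | exists sg tau, is_NE delta sg tau /\ x = payoff_vec delta sg tau].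

Definition NE_blind_payoffs (delta : R) : set (R * R) :=
  [set x | exists sg tau, is_NE_blind delta sg tau
                          /\ x = payoff_vec delta (blind_as_sender sg) tau].
End Game.

(* Main.v *)
Require Import Defs.
From mathcomp Require Import all_boot all_order all_algebra.
From mathcomp Require Import all_classical all_reals all_analysis.
From mathcomp Require Import ring.
Import Order.TTheory GRing.Theory Num.Theory.
Local Open Scope ring_scope.
Local Open Scope classical_set_scope.

Section Ssum.
Variable R : numDomainType.

Fixpoint ssum (T : finType) (n : nat) (f : seq T -> R) : R :=
  if n is n'.+1 then \sum_(x : T) ssum T n' (fun l => f (x :: l)) else f [::].
Arguments ssum {T}.

Lemma tuple_sumE (T : finType) n (f : seq T -> R) :
  \sum_(h : n.-tuple T) f h = ssum n f.
Proof.
elim: n f => [|n IH] f /=.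
  rewrite (big_pred1 [tuple]) // => t; rewrite /= [t]tuple0; apply/esym/eqP; reflexivity.
rewrite (reindex (fun p : T * n.-tuple T => [tuple of p.1 :: p.2])) /=; last first.
  exists (fun t : n.+1.-tuple T => (thead t, [tuple of behead t])).
    by move=> [x t] _ /=; rewrite theadE; congr pair; apply: val_inj.
  by move=> t _ /=; rewrite -tuple_eta.
rewrite -(pair_bigA _ (fun x (t : n.-tuple T) => f (x :: t))) /=.
apply: eq_bigr => x _; exact: (IH (fun l => f (x :: l))).
Qed.

Lemma eq_ssum (T : finType) n (f g : seq T -> R) :
  (forall l, size l = n -> f l = g l) -> ssum n f = ssum n g.
Proof.
elim: n f g => [|n IH] f g H /=; first by rewrite H.
apply: eq_bigr => x _; apply: IH => l Hl; apply: H; by rewrite /= Hl.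
Qed.

Lemma ssum_sum (T : finType) (I : finType) n (F : I -> seq T -> R) :
  ssum n (fun l => \sum_(i : I) F i l) = \sum_(i : I) ssum n (F i).
Proof.
elim: n F => [|n IH] F //=.
rewrite exchange_big /=; apply: eq_bigr => x _; exact: IH.
Qed.

Lemma ssumZ (T : finType) n c (f : seq T -> R) :
  ssum n (fun l => c * f l) = c * ssum n f.
Proof.
elim: n f => [|n IH] f //=.
rewrite mulr_sumr; apply: eq_bigr => x _; exact: IH.
Qed.

Lemma ssum_ge0 (T : finType) n (f : seq T -> R) :
  (forall l, 0 <= f l) -> 0 <= ssum n f.
Proof.
elim: n f => [|n IH] f H //=.
apply: sumr_ge0 => x _; exact: IH.
Qed.

Lemma ssum_rcons (T : finType) n (f : seq T -> R) :
  ssum n.+1 f = ssum n (fun l => \sum_(x : T) f (rcons l x)).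
Proof.
elim: n f => [|n IH] f //=.
apply: eq_bigr => x _; exact: (IH (fun l => f (x :: l))).
Qed.

Lemma ssum_zip (X Y : finType) n (f : seq (X * Y) -> R) :
  ssum n f = ssum n (fun xs => ssum n (fun ys => f (zip xs ys))).
Proof.
elim: n f => [|n IH] f //=.
transitivity (\sum_(p : X * Y) ssum n (fun l => f ((p.1, p.2) :: l))).
  by apply: eq_bigr => -[x y].
rewrite -(pair_bigA _ (fun x y => ssum n (fun l => f ((x, y) :: l)))) /=.
apply: eq_bigr => x _.
rewrite -ssum_sum; rewrite IH. apply: eq_ssum => xs _.
by rewrite ssum_sum.
Qed.
End Ssum.
Arguments ssum {R T}.

Section G.
Variables (R : realType) (S B : finType) (m : S -> R).
Local Notation sstrat := (sender_strat R S B).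
Local Notation bstrat := (blind_strat R S).
Local Notation rstrat := (receiver_strat R S B).
Local Notation pub := (@pub S B).
Local Notation priv_blind := (@priv_blind S B).

Fixpoint Wsnd (sg : sstrat) (past r : seq (stage_rec S B)) : R :=
  match r with [::] => 1 | e :: r' => m e.1.1 * sg past e.1.1 e.1.2 * Wsnd sg (rcons past e) r' end.

Fixpoint Q (tau : rstrat) (acc l : seq (S * B)) : R :=
  match l with [::] => 1 | p :: l' => tau acc p.1 p.2 * Q tau (rcons acc p) l' end.

Fixpoint Pb (sg : bstrat) (acc l : seq (S * S)) : R :=
  match l with [::] => 1 | x :: l' => m x.1 * sg acc x.1 x.2 * Pb sg (rcons acc x) l' end.

Lemma pp_fact sg tau past r :
  play_prob m sg tau past r = Wsnd sg past r * Q tau (map pub past) (map pub r).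
Proof.
elim: r past => [|e r IH] past /=; first by rewrite mulr1.
rewrite IH map_rcons /=; ring.
Qed.

Lemma Wsnd_rcons sg past r e :
  Wsnd sg past (rcons r e) = Wsnd sg past r * (m e.1.1 * sg (past ++ r) e.1.1 e.1.2).
Proof.
elim: r past => [|e0 r IH] past /=; first by rewrite cats0 mulr1 mul1r.
by rewrite IH cat_rcons mulrA.
Qed.

Lemma Q_rcons tau acc l p :
  Q tau acc (rcons l p) = Q tau acc l * tau (acc ++ l) p.1 p.2.
Proof.
elim: l acc => [|p0 l IH] acc /=; first by rewrite cats0 mulr1 mul1r.
by rewrite IH cat_rcons mulrA.
Qed.

Lemma Pb_rcons sg acc l x :
  Pb sg acc (rcons l x) = Pb sg acc l * (m x.1 * sg (acc ++ l) x.1 x.2).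
Proof.
elim: l acc => [|x0 l IH] acc /=; first by rewrite cats0 mulr1 mul1r.
by rewrite IH cat_rcons mulrA.
Qed.

Lemma Wsnd_blind (sg : bstrat) past r :
  Wsnd (blind_as_sender sg) past r = Pb sg (map priv_blind past) (map priv_blind r).
Proof.
elim: r past => [|e r IH] past //=.
by rewrite IH map_rcons.
Qed.

Lemma map_priv_zip (sa : seq (S * S)) (bs : seq B) :
  size sa = size bs -> map priv_blind (zip sa bs) = sa.
Proof. elim: sa bs => [|x sa IH] [|b bs] //= [] /IH ->. by []. Qed.

Lemma map_pub_zip (sa : seq (S * S)) (bs : seq B) :
  map pub (zip sa bs) = zip (map snd sa) bs.
Proof. by elim: sa bs => [|x sa IH] [|b bs] //=; rewrite IH. Qed.

Lemma stageE u sg tau n :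
  stage_payoff m u sg tau n =
  ssum n (fun sa : seq (S * S) => ssum n (fun bs : seq B =>
     \sum_(x : S * S) \sum_(b : B)
       Wsnd sg [::] (rcons (zip sa bs) (x, b)) *
       Q tau [::] (rcons (zip (map snd sa) bs) (x.2, b)) * u x.1 b)).
Proof.
rewrite /stage_payoff (@tuple_sumE _ _ _ (fun h : seq (stage_rec S B) =>
  \sum_e play_prob m sg tau [::] (rcons h e) * u e.1.1 e.2)) ssum_zip.
apply: eq_ssum => sa _; apply: eq_ssum => bs _.
rewrite pair_bigA /=; apply: eq_bigr => -[x b] _ /=.
by rewrite pp_fact /= map_rcons map_pub_zip.
Qed.


Definition M (tau : rstrat) (as_ : seq S) (a : S) (b : B) : R :=
  ssum (size as_) (fun bs : seq B => Q tau [::] (rcons (zip as_ bs) (a, b))).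

Lemma stage_blind u (sg : bstrat) tau n :
  stage_payoff m u (blind_as_sender sg) tau n =
  ssum n (fun sa : seq (S * S) => \sum_(x : S * S) \sum_(b : B)
     Pb sg [::] (rcons sa x) * u x.1 b * M tau (map snd sa) x.2 b).
Proof.
rewrite stageE; apply: eq_ssum => sa Hsa.
transitivity (ssum n (fun bs : seq B => \sum_(x : S * S) \sum_(b : B)
   (Pb sg [::] (rcons sa x) * u x.1 b) * Q tau [::] (rcons (zip (map snd sa) bs) (x.2, b)))).
  apply: eq_ssum => bs Hbs; apply: eq_bigr => x _; apply: eq_bigr => b _.
  rewrite Wsnd_blind /= map_rcons map_priv_zip ?Hsa ?Hbs //; ring.
rewrite ssum_sum; apply: eq_bigr => x _; rewrite ssum_sum; apply: eq_bigr => b _.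
by rewrite ssumZ /M size_map Hsa.
Qed.


Definition tt (tau : rstrat) : rstrat := fun hp a b => M tau (map fst hp) a b.

Lemma Q_ge0 tau acc l : valid_receiver tau -> 0 <= Q tau acc l.
Proof.
move=> V; elim: l acc => [|p l IH] acc //=.
by apply: mulr_ge0 => //; case: (V acc p.1).
Qed.

Lemma Q_sum1 tau (as_ : seq S) acc : valid_receiver tau ->
  ssum (size as_) (fun bs : seq B => Q tau acc (zip as_ bs)) = 1.
Proof.
move=> V; elim: as_ acc => [|a as_ IH] acc //=.
transitivity (\sum_(b : B) tau acc a b).
  apply: eq_bigr => b _ /=; by rewrite ssumZ IH mulr1.
by case: (V acc a).
Qed.

Lemma tt_valid tau : valid_receiver tau -> valid_receiver (tt tau).
Proof.
move=> V h a; split.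
  by move=> b; apply: ssum_ge0 => l; apply: Q_ge0.
rewrite /tt /M -ssum_sum -[RHS](@Q_sum1 tau (map fst h) [::] V).
apply: eq_ssum => bs _.
under eq_bigr do rewrite Q_rcons cat0s.
by rewrite -mulr_sumr; case: (V (zip (map fst h) bs) a) => _ ->; rewrite mulr1.
Qed.

Lemma M_tt tau as_ a b : valid_receiver tau -> M (tt tau) as_ a b = M tau as_ a b.
Proof.
move=> V; rewrite {1}/M.
transitivity (ssum (size as_) (fun bs : seq B => M tau as_ a b * Q (tt tau) [::] (zip as_ bs))).
  apply: eq_ssum => bs Hbs; rewrite Q_rcons cat0s mulrC /tt.
  by rewrite -/(unzip1 _) unzip1_zip // Hbs.
by rewrite ssumZ Q_sum1 ?mulr1 //; apply: tt_valid.
Qed.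

Lemma L1 u (sg : bstrat) tau n : valid_receiver tau ->
  stage_payoff m u (blind_as_sender sg) tau n =
  stage_payoff m u (blind_as_sender sg) (tt tau) n.
Proof.
move=> V; rewrite !stage_blind; apply: eq_ssum => sa _.
apply: eq_bigr => x _; apply: eq_bigr => b _; by rewrite M_tt.
Qed.


Section L2.
Variables (sg : sstrat) (tau : rstrat).
Hypotheses (Vm : is_dist m) (Vs : valid_sender sg) (Vt : valid_receiver tau).
Let T := tt tau.
Let VT : valid_receiver T := @tt_valid tau Vt.

Lemma Wsnd_ge0 past r : 0 <= Wsnd sg past r.
Proof.
elim: r past => [|e r IH] past //=.
apply: mulr_ge0 => //; apply: mulr_ge0; first by case: Vm.
by case: (Vs past e.1.1).
Qed.

Definition Dd (sa : seq (S * S)) : R :=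
  ssum (size sa) (fun bs : seq B => Wsnd sg [::] (zip sa bs) * Q T [::] (zip (map snd sa) bs)).
Definition Nn (sa : seq (S * S)) (x : S * S) : R :=
  ssum (size sa) (fun bs : seq B => Wsnd sg [::] (zip sa bs) * Q T [::] (zip (map snd sa) bs)
     * sg (zip sa bs) x.1 x.2).

Definition sig' : bstrat := fun h s a => if Dd h == 0 then #|S|%:R^-1 else Nn h (s, a) / Dd h.

Lemma Dd_ge0 sa : 0 <= Dd sa.
Proof. apply: ssum_ge0 => l; apply: mulr_ge0; [exact: Wsnd_ge0 | exact: Q_ge0]. Qed.

Lemma Nn_ge0 sa x : 0 <= Nn sa x.
Proof.
apply: ssum_ge0 => l; apply: mulr_ge0; last by case: (Vs (zip sa l) x.1).
apply: mulr_ge0; [exact: Wsnd_ge0 | exact: Q_ge0].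
Qed.

Lemma sumNn sa s : \sum_(a : S) Nn sa (s, a) = Dd sa.
Proof.
rewrite /Nn -ssum_sum; apply: eq_ssum => bs _.
by rewrite -mulr_sumr; case: (Vs (zip sa bs) s) => _ ->; rewrite mulr1.
Qed.

Lemma Nn_eq sa x : Nn sa x = sig' sa x.1 x.2 * Dd sa.
Proof.
rewrite /sig'; case: eqP => [D0|/eqP D0]; last by rewrite divfK.
rewrite D0 mulr0.
have := psumr_eq0P (P := predT) (F := fun a => Nn sa (x.1, a)) (fun a _ => Nn_ge0 sa _).
by rewrite sumNn D0 => /(_ erefl x.2 erefl); case: x.
Qed.

Lemma cardS_gt0 : (0 < #|S|)%N.
Proof.
case: Vm => _ H; apply/card_gt0P.
case: (pselect (exists i : S, i \in S)) => // /forallNP N0.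
move: H; rewrite big1 // => [/eqP|i _]; first by rewrite eq_sym oner_eq0.
by case: (N0 i).
Qed.

Lemma sig'_valid : valid_blind sig'.
Proof.
move=> h s; split.
  move=> a; rewrite /sig'; case: eqP => _; first by rewrite invr_ge0 ler0n.
  by apply: divr_ge0; [exact: Nn_ge0 | exact: Dd_ge0].
rewrite /sig'; case: eqP => [_|/eqP D0].
  rewrite sumr_const (_ : #|_| = #|S|) // -[LHS]mulr_natr mulVf // pnatr_eq0 -lt0n.
  exact: cardS_gt0.
under eq_bigr do rewrite mulrC.
by rewrite -mulr_sumr sumNn mulVf.
Qed.

Lemma Dd_Pb sa : Dd sa = Pb sig' [::] sa.
Proof.
elim/last_ind: sa => [|sa x IH]; first by rewrite /Dd /= mulr1.
rewrite Pb_rcons cat0s -IH /Dd size_rcons ssum_rcons.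
transitivity (ssum (size sa) (fun bs : seq B => m x.1 *
   (Wsnd sg [::] (zip sa bs) * Q T [::] (zip (map snd sa) bs) * sg (zip sa bs) x.1 x.2))).
  apply: eq_ssum => bs Hbs.
  under eq_bigr do rewrite map_rcons !zip_rcons ?size_map ?Hbs // Wsnd_rcons Q_rcons !cat0s.
  rewrite /=.
  transitivity (\sum_(b : B) (m x.1 * (Wsnd sg [::] (zip sa bs) * Q T [::] (zip (map snd sa) bs)
      * sg (zip sa bs) x.1 x.2)) * T (zip (map snd sa) bs) x.2 b).
    by apply: eq_bigr => b _; ring.
  by rewrite -mulr_sumr; case: (VT (zip (map snd sa) bs) x.2) => _ ->; rewrite mulr1.
rewrite ssumZ -/(Nn sa x) Nn_eq -/(Dd sa); ring.
Qed.

Lemma L2 u n : stage_payoff m u sg T n = stage_payoff m u (blind_as_sender sig') T n.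
Proof.
rewrite stageE stage_blind; apply: eq_ssum => sa Hsa.
transitivity (ssum n (fun bs : seq B => \sum_(x : S * S) \sum_(b : B)
   (m x.1 * M tau (map snd sa) x.2 b * u x.1 b) *
   (Wsnd sg [::] (zip sa bs) * Q T [::] (zip (map snd sa) bs) * sg (zip sa bs) x.1 x.2))).
  apply: eq_ssum => bs Hbs; apply: eq_bigr => x _; apply: eq_bigr => b _.
  rewrite Wsnd_rcons Q_rcons !cat0s /= /T /tt -/(unzip1 _) unzip1_zip ?size_map ?Hsa ?Hbs //.
  ring.
rewrite ssum_sum; apply: eq_bigr => x _; rewrite ssum_sum; apply: eq_bigr => b _.
rewrite ssumZ -Hsa -/(Nn sa x) Nn_eq Dd_Pb Pb_rcons cat0s /T M_tt //; ring.
Qed.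

End L2.

End G.

Lemma disc_eq (R : realType) (S B : finType) (m : S -> R) delta u s1 t1 s2 t2 :
  (forall n, stage_payoff m u s1 t1 n = stage_payoff m u s2 t2 n) ->
  disc_payoff m delta u s1 t1 = disc_payoff (B:=B) m delta u s2 t2.
Proof.
move=> H; rewrite /disc_payoff (_ : stage_payoff m u s1 t1 = stage_payoff m u s2 t2) //.
exact: funext.
Qed.

Theorem proposition2 (R : realType) (S B : finType) (m : S -> R)
    (u1 u2 : S -> B -> R) (delta : R) :
  is_dist m -> 0 < delta < 1 ->
  NE_blind_payoffs m u1 u2 delta `<=` NE_payoffs m u1 u2 delta.
Proof.
move=> Vm _ x [sg [tau [[Vsg Vtau Hs Hr] ->]]].
have E : forall u, disc_payoff m delta u (blind_as_sender sg) tau =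
    disc_payoff m delta u (blind_as_sender sg) (@tt _ _ _ tau).
  by move=> u; apply: disc_eq => n; exact: L1.
exists (blind_as_sender sg), (@tt _ _ _ tau); split; last by rewrite /payoff_vec !E.
split.
- by move=> h s; apply: Vsg.
- exact: (@tt_valid _ _ _ tau Vtau).
- move=> sg' Vs'.
  rewrite (@disc_eq _ _ _ m delta u1 _ _ _ _ (fun n => @L2 _ _ _ m sg' tau Vm Vs' Vtau u1 n)).
  rewrite -E -(@disc_eq _ _ _ m delta u1 _ _ _ _ (fun n => @L1 _ _ _ m u1 _ tau n Vtau)).
  apply: Hs; exact: (@sig'_valid _ _ _ m sg' tau Vm Vs' Vtau).
- move=> tau' Vt'; rewrite -E; exact: Hr.
Qed.
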